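(* Assume: - the strengthened triangle inequality under the square holds with constant $a_0$; - the forms $\overline a_{l,i}$ provide a positive semi-definite splitting with constant $b_0$; - the subspaces are locally stable with constant $C_1$. Let $v_h\in V_h$ and define recursively $v_L=v_h$. For $l=L,L-1,\dots,1$, let $v_l=v_{l-1}+\sum_{i=1}^{P_l}v_{l,i}$ be a decomposition of $v_l\in V_{h,l}$ as in the definition of local stability. This yields $v_h=v_0+\sum_{l=1}^L\sum_{i=1}^{P_l}v_{l,i}$ with $v_0\in V_{h,0}$. Then, with $C=2(1+a_0b_0C_1)$, $$\|v_0\|_{a_h}^2+\sum_{l=1}^L\sum_{i=1}^{P_l}\|v_{l,i}\|_{a_h}^2\le C^L\Bigl(1+\frac{b_0C_1}{C-1}\Bigr)\|v_h\|_{a_h}^2.$$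
   Context: Let $V_h$ be a finite-dimensional real vector space with a symmetric positive definite bilinear form $a_h$, and $\|v\|_{a_h}=\sqrt{a_h(v,v)}$. Let $L\ge1$ and let $V_{h,0}\subseteq V_{h,1}\subseteq\cdots\subseteq V_{h,L}=V_h$ be nested subspaces. For each level $1\le l\le L$ let $P_l\in\mathbb N$ and let $V_{h,l,i}\subseteq V_{h,l}$, $i=1,\dots,P_l$, be subspaces. For each such $(l,i)$ let $\overline V_{h,l,i}$ be a finite-dimensional real vector space, $r_{l,i}:V_{h,l}\to\overline V_{h,l,i}$ a linear map, and $\overline a_{l,i}$ a symmetric positive semi-definite bilinear form on $\overline V_{h,l,i}$ with seminorm $|w|_{\overline a_{l,i}}=\sqrt{\overline a_{l,i}(w,w)}$. Strengthened triangle inequality under the square with constant $a_0>0$: for every $1\le l\le L$ and every choice of $v_{l,i}\in V_{h,l,i}$, $$\Bigl\|\sum_{i=1}^{P_l}v_{l,i}\Bigr\|_{a_h}^2\le a_0\sum_{i=1}^{P_l}\|v_{l,i}\|_{a_h}^2.$$ Positive semi-definite splitting with constant $b_0>0$: for every $1\le l\le L$ and all $v_l\in V_{h,l}$, $$\sum_{i=1}^{P_l}|r_{l,i}v_l|_{\overline a_{l,i}}^2\le b_0\|v_l\|_{a_h}^2.$$ Local stability with constant $C_1>0$: for every $1\le l\le L$ and every $v_l\in V_{h,l}$ there is a decomposition $v_l=v_{l-1}+\sum_{i=1}^{P_l}v_{l,i}$ with $v_{l-1}\in V_{h,l-1}$ and $v_{l,i}\in V_{h,l,i}$ such that $$\|v_{l,i}\|_{a_h}^2\le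 C_1|r_{l,i}v_l|_{\overline a_{l,i}}^2\quad\text{for all }1\le i\le P_l.$$ The constants $a_0,b_0,C_1$ are independent of $l$. *)

(* Defs.v *)
From HB Require Import structures.
From mathcomp Require Import all_boot all_order all_algebra.
From mathcomp Require Import reals.
Set Implicit Arguments. Unset Strict Implicit. Unset Printing Implicit Defensive.
Import Order.TTheory GRing.Theory Num.Theory.
Local Open Scope ring_scope.

Definition sym_bilinear (R : realType) (U : lmodType R) (b : U -> U -> R) : Prop :=
  (forall u v, b u v = b v u) /\
  (forall (c : R) (u v w : U), b (c *: u + v) w = c * b u w + b v w).

Definition spd_form (R : realType) (U : lmodType R) (b : U -> U -> R) : Prop :=
  sym_bilinear b /\ (forall v, v != 0 -> 0 < b v v).

Definition spsd_form (R : realType) (U : lmodType R) (b : U -> U -> R) : Prop :=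
  sym_bilinear b /\ (forall v, 0 <= b v v).

(* Main.v *)
Require Import Defs.
From HB Require Import structures.
From mathcomp Require Import all_boot all_order all_algebra.
From mathcomp Require Import reals.
Import Order.TTheory GRing.Theory Num.Theory.
Local Open Scope ring_scope.

From mathcomp Require Import ring lra zify.
Lemma aDl {R : realType} {V : lmodType R} {a : V -> V -> R} :
  sym_bilinear a -> forall u v w, a (u + v) w = a u w + a v w.
Proof. by move=> [_ H] u v w; rewrite -[u in LHS]scale1r H mul1r. Qed.

Lemma a0l {R : realType} {V : lmodType R} {a : V -> V -> R} :
  sym_bilinear a -> forall w, a 0 w = 0.
Proof.
move=> Ha w; have := aDl Ha 0 0 w; rewrite addr0 => h.
have : a 0 w + a 0 w - a 0 w = a 0 w - a 0 w by rewrite -h.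
by rewrite addrK subrr.
Qed.

Lemma aNl {R : realType} {V : lmodType R} {a : V -> V -> R} :
  sym_bilinear a -> forall u w, a (- u) w = - a u w.
Proof.
move=> Ha u w; apply/eqP; rewrite -subr_eq0 opprK -aDl // addNr a0l //.
Qed.

Lemma aBl {R : realType} {V : lmodType R} {a : V -> V -> R} :
  sym_bilinear a -> forall u v w, a (u - v) w = a u w - a v w.
Proof. by move=> Ha u v w; rewrite aDl // aNl. Qed.

Lemma aDr {R : realType} {V : lmodType R} {a : V -> V -> R} :
  sym_bilinear a -> forall u v w, a w (u + v) = a w u + a w v.
Proof. by move=> Ha u v w; rewrite (proj1 Ha) aDl // !(proj1 Ha w). Qed.

Lemma aBr {R : realType} {V : lmodType R} {a : V -> V -> R} :
  sym_bilinear a -> forall u v w, a w (u - v) = a w u - a w v.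
Proof. by move=> Ha u v w; rewrite (proj1 Ha) aBl // !(proj1 Ha w). Qed.

Lemma a_ge0 {R : realType} {V : lmodType R} {a : V -> V -> R} :
  spd_form a -> forall x, 0 <= a x x.
Proof.
move=> [Hs Hp] x; case: (eqVneq x 0) => [->|nz]; first by rewrite a0l.
exact: ltW (Hp _ nz).
Qed.

Lemma a_par {R : realType} {V : lmodType R} {a : V -> V -> R} :
  spd_form a -> forall x y, a (x - y) (x - y) <= 2 * a x x + 2 * a y y.
Proof.
move=> Ha x y; have Hs := proj1 Ha.
have := a_ge0 Ha (x + y).
rewrite !(aDl Hs, aBl Hs, aDr Hs, aBr Hs) (proj1 Hs y x).
move=> h; lra.
Qed.
Lemma geo_sum {R : realType} (C : R) n :
  (C - 1) * \sum_(1 <= l < n.+1) C ^+ (n - l) = C ^+ n - 1.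
Proof.
elim: n => [|n IH]; first by rewrite big_geq // mulr0 expr0 subrr.
rewrite big_nat_recr //= subnn expr0.
rewrite (eq_big_nat _ _ (F2 := fun l => C * C ^+ (n - l))); last first.
  by move=> i /andP[_ hi]; rewrite subSn // exprS.
by rewrite -mulr_sumr mulrDr mulrCA IH exprS; ring.
Qed.

Theorem lemma3p10
  (R : realType) (V : vectType R) (a : V -> V -> R)
  (L : nat) (Vl : nat -> {vspace V}) (P : nat -> nat)
  (Vli : nat -> nat -> {vspace V})
  (W : nat -> nat -> vectType R)
  (r : forall l i, {linear V -> W l i})
  (abar : forall l i, W l i -> W l i -> R)
  (a0 b0 C1 : R) :
  (1 <= L)%N ->
  spd_form a ->
  (forall l, (l < L)%N -> (Vl l <= Vl l.+1)%VS) ->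
  Vl L = fullv ->
  (forall l i, (1 <= l <= L)%N -> (1 <= i <= P l)%N -> (Vli l i <= Vl l)%VS) ->
  (forall l i, (1 <= l <= L)%N -> (1 <= i <= P l)%N -> spsd_form (abar l i)) ->
  0 < a0 -> 0 < b0 -> 0 < C1 ->
  (* strengthened triangle inequality under the square *)
  (forall l, (1 <= l <= L)%N -> forall u : nat -> V,
     (forall i, (1 <= i <= P l)%N -> u i \in Vli l i) ->
     a (\sum_(1 <= i < (P l).+1) u i) (\sum_(1 <= i < (P l).+1) u i)
       <= a0 * \sum_(1 <= i < (P l).+1) a (u i) (u i)) ->
  (* positive semi-definite splitting *)
  (forall l, (1 <= l <= L)%N -> forall v, v \in Vl l ->
     \sum_(1 <= i < (P l).+1) abar l i (r l i v) (r l i v) <= b0 * a v v) ->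
  (* local stability *)
  (forall l, (1 <= l <= L)%N -> forall v, v \in Vl l ->
     exists (vprev : V) (u : nat -> V),
       [/\ vprev \in Vl l.-1,
           (forall i, (1 <= i <= P l)%N -> u i \in Vli l i),
           v = vprev + \sum_(1 <= i < (P l).+1) u i &
           (forall i, (1 <= i <= P l)%N ->
              a (u i) (u i) <= C1 * abar l i (r l i v) (r l i v))]) ->
  (* the recursively constructed decomposition *)
  forall (vh : V) (v : nat -> V) (w : nat -> nat -> V),
    v L = vh ->
    (forall l, (1 <= l <= L)%N ->
       [/\ v l.-1 \in Vl l.-1,
           (forall i, (1 <= i <= P l)%N -> w l i \in Vli l i),
           v l = v l.-1 + \sum_(1 <= i < (P l).+1) w l i &
           (forall i, (1 <= i <= P l)%N ->
              a (w l i) (w l i) <= C1 * abar l i (r l i (v l)) (r l i (v l)))]) ->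
    let C := 2 * (1 + a0 * b0 * C1) in
    a (v 0%N) (v 0%N)
      + \sum_(1 <= l < L.+1) \sum_(1 <= i < (P l).+1) a (w l i) (w l i)
    <= C ^+ L * (1 + b0 * C1 / (C - 1)) * a vh vh.
Proof.
move=> L1 Ha Hinc HL Hsub Hbar a0p b0p C1p Hsti Hsplit _ vh v w HvL Hdec.
cbv zeta; set C := 2 * (1 + a0 * b0 * C1).
have Hs := proj1 Ha.
have Hvl : forall l, (1 <= l <= L)%N -> v l \in Vl l.
  move=> l /andP[l1 lL]; case: (ltnP l L) => hl.
    have hl1 : (1 <= l.+1 <= L)%N by lia.
    by have [h1 _ _ _] := Hdec l.+1 hl1.
  have -> : l = L by lia.
  by rewrite HL memvf.
have HE : forall l, (1 <= l <= L)%N ->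
   \sum_(1 <= i < (P l).+1) a (w l i) (w l i) <= b0 * C1 * a (v l) (v l).
  move=> l hl; have [_ _ _ H4] := Hdec l hl.
  have hs : \sum_(1 <= i < (P l).+1) a (w l i) (w l i) <=
     \sum_(1 <= i < (P l).+1) C1 * abar l i (r l i (v l)) (r l i (v l)).
    by apply: ler_sum_nat => i; rewrite ltnS; apply: H4.
  apply: le_trans hs _.
  rewrite -mulr_sumr (mulrC b0) -mulrA; apply: ler_wpM2l; first exact: ltW.
  exact: Hsplit _ hl _ (Hvl _ hl).
have Hge := a_ge0 Ha.
have HV : forall l, (1 <= l <= L)%N -> a (v l.-1) (v l.-1) <= C * a (v l) (v l).
  move=> l hl; have [_ H2 H3 _] := Hdec l hl.
  have -> : v l.-1 = v l - \sum_(1 <= i < (P l).+1) w l i by rewrite H3 addrK.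
  apply: le_trans (a_par Ha _ _) _.
  have h1 := Hsti l hl _ H2.
  have h2 := HE l hl.
  have h3 : a0 * \sum_(1 <= i < (P l).+1) a (w l i) (w l i) <= a0 * (b0 * C1 * a (v l) (v l)).
    by apply: ler_wpM2l => //; exact: ltW.
  rewrite /C; have := Hge (v l); lra.
have Cgt1 : 1 < C.
  rewrite /C; have : 0 < a0 * b0 * C1 by rewrite !mulr_gt0.
  lra.
have C0 : 0 <= C by lra.
have HP : forall k, (k <= L)%N -> a (v (L - k)%N) (v (L - k)%N) <= C ^+ k * a vh vh.
  elim=> [|k IH] hk; first by rewrite subn0 expr0 mul1r HvL.
  have hl : (1 <= L - k <= L)%N by apply/andP; split; lia.
  have -> : (L - k.+1 = (L - k).-1)%N by lia.
  apply: le_trans (HV _ hl) _.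
  rewrite exprS -mulrA; apply: ler_wpM2l => //; apply: IH; lia.
have HEl : forall l, (1 <= l < L.+1)%N ->
  \sum_(1 <= i < (P l).+1) a (w l i) (w l i) <= b0 * C1 * a vh vh * C ^+ (L - l).
  move=> l; rewrite ltnS => hl; apply: le_trans (HE l hl) _.
  rewrite -(mulrA (b0 * C1)); apply: ler_wpM2l; first by apply: mulr_ge0; apply: ltW.
  have hLl : (L - l <= L)%N by lia.
  have := HP _ hLl; have -> : (L - (L - l) = l)%N by lia.
  by rewrite mulrC.
have h1 := HP L (leqnn L); rewrite subnn in h1.
have h2 := ler_sum_nat HEl; rewrite -mulr_sumr in h2.
have G := geo_sum C L.
set S := \sum_(1 <= l < L.+1) C ^+ (L - l) in G h2.
have hS : S = (C ^+ L - 1) / (C - 1).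
  by rewrite -G; field; rewrite subr_eq0 gt_eqF.
rewrite hS in h2.
have hv := Hge vh.
have hbc : 0 <= b0 * C1 / (C - 1) by apply: divr_ge0; [apply: mulr_ge0; apply: ltW|lra].
have hqx : 0 <= b0 * C1 / (C - 1) * a vh vh by apply: mulr_ge0.
have e : b0 * C1 * a vh vh * ((C ^+ L - 1) / (C - 1)) =
   b0 * C1 / (C - 1) * a vh vh * C ^+ L - b0 * C1 / (C - 1) * a vh vh.
  by field; rewrite subr_eq0 gt_eqF.
rewrite e in h2.
lra.
Qed.
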